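(* For every choice of reward function $Rew()$ and environment function $Env()$, the problem ESCreate (with $Rew()$ and $Env()$ fixed to these choices) is unsolvable: there is no algorithm (Turing machine), regardless of running time or memory, that produces the correct output for every instance.
   Context: Model. Let $X=\{x_1,\dots,x_{|X|}\}$ be Boolean variables and $O$ a finite output set. Software system requirements are a finite set $R$ of pairs $(i,o)$, where $i$ is a truth assignment to $X$ and $o\in O$. Interfaces and components follow the Dana runtime component model: an interface is a set of function prototypes (function name, return type, parameter types) together with a set of typed transfer fields; a component provides one or more interfaces and requires zero or more interfaces, and contains code (in a Dana-like imperative language with assignments, conditionals, loops, arrays, function calls and an output statement; this language can simulate any Turing machine) implementing every function of its provided interfaces; this code may call functions and use transfer fields of its required interfaces. $L_{int}$ and $L_{comp}$ are finite libraries of interfaces and components. Given a base component $c\in L_{comp}$ implementing a function main, a valid component-based software system $S$ based on $c$ (relative to $L_{int},L_{comp}$) is obtained by choosing, for each required interface of $c$, a component of $L_{comp}$ providing it, and recursively for each required interface of every chosen component; separate copies of a component are used for separate required-interface occurrences, and when a component providing several interfaces implements one of them, only a reduced copy containing that interface's code is used. Its component wiring tree has root $c$, vertices the chosen component copies, and arcs (wirings) labelled by the implemented interfaces; no component label may occur twice on a root-to-leaf path. $S$ is working relative to $R$ if for every $(i,o)\in R$, running $S$ on input $i$ outputs $o$. A reward function $Rew()$ maps a system to a positive integer (smaller is better) and an environment function $Env()$ maps a system to a collection of events and metric values; both are computable in time polynomial in the size of the system and $Rew()$ only chooses among working systems. Problem ESCreate: Input: $R$, $L_{int}$, $L_{comp}$,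 base component $c\in L_{comp}$, and $Rew()$, $Env()$. Output: a working system $S$ based on $c$ relative to $L_{int},L_{comp},R$ with the smallest value of $Rew(S)$ among all such working systems, if one exists, and the special symbol $\bot$ otherwise. *)

(* Defs.v *)
From Stdlib Require Import ZArith.
From mathcomp Require Import all_boot.

Set Implicit Arguments.
Unset Strict Implicit.
Unset Printing Implicit Defensive.

Inductive ty := TInt | TBool | TArr | TVoid.

Inductive binop := OAdd | OSub | OMul | ODiv | OMod | OLt | OLe | OEq | OAnd | OOr.

(* Field slots: [None] = a transfer field of the interface this (copy of the)
   component implements; [Some r] = a transfer field of its r-th required
   interface. *)
Inductive expr :=
| EInt (z : Z)
| EBool (b : bool)
| EVar (x : nat)
| EInput (k : nat)               (* value of the Boolean input variable x_(k+1) *)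
| EField (slot : option nat) (f : nat)
| EBin (op : binop) (e1 e2 : expr)
| ENot (e : expr)
| ENewArr (len : expr)
| EIndex (a i : expr)
| ELen (a : expr).

Inductive stmt :=
| SSkip
| SAssign (x : nat) (e : expr)
| SAssignIdx (x : nat) (i e : expr)
| SFieldAssign (slot : option nat) (f : nat) (e : expr)
| SSeq (s1 s2 : stmt)
| SIf (c : expr) (s1 s2 : stmt)
| SWhile (c : expr) (s : stmt)
| SCall (x : nat) (slot : nat) (fn : nat) (args : seq expr)
    (* x := <r-th required interface>.fn(args) *)
| SReturn (e : expr)
| SOutput (e : expr).

Record fproto := FProto { fp_name : nat; fp_ret : ty; fp_params : seq ty }.

Record interface := Interface {
  i_name : nat; i_funs : seq fproto; i_fields : seq (nat * ty) }.

Record fundef := FunDef {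
  fd_iface : nat; fd_name : nat; fd_params : seq nat; fd_body : stmt }.

Record component := Component {
  c_label : nat; c_prov : seq nat; c_req : seq nat; c_code : seq fundef }.

Definition main_fn : nat := 0.

(* A node is a copy of a component, together with the interface it implements
   for its parent ([None] for the root); the children are the components wired
   to its required interfaces, in order. *)
Inductive system := SNode (k : component) (impl : option nat) (ch : seq system).

Fixpoint mem_seq (T : Type) (x : T) (s : seq T) : Prop :=
  match s with [::] => False | y :: s' => y = x \/ mem_seq x s' end.

Definition dummy_comp := Component 0 [::] [::] [::].
Definition dummy_sys := SNode dummy_comp None [::].

(* [valid_sub Lcomp path p sys]: sys is a valid wiring (sub)tree whose root
   implements interface [p], where [path] lists the labels of the ancestors. *)
Inductive valid_sub (Lcomp : seq component) : seq nat -> option nat -> system -> Prop :=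
| VNode path p k ch :
    mem_seq k Lcomp ->
    (forall i, p = Some i -> mem_seq i (c_prov k)) ->
    c_label k \notin path ->
    size ch = size (c_req k) ->
    (forall j, j < size ch ->
       valid_sub Lcomp (c_label k :: path) (Some (nth 0 (c_req k) j)) (nth dummy_sys ch j)) ->
    valid_sub Lcomp path p (SNode k p ch).

Definition valid_system (Lcomp : seq component) (c : component) (sys : system) : Prop :=
  exists ch, sys = SNode c None ch /\ valid_sub Lcomp [::] None sys.

Inductive value := VInt (z : Z) | VBool (b : bool) | VArr (s : seq Z) | VVoid.

Definition locals := nat -> option value.
(* transfer-field store, indexed by the address (path of child indices from
   the root) of the node implementing the interface, and the field name *)
Definition store := seq nat -> nat -> option value.

Definition empty_locals : locals := fun _ => None.
Definition empty_store : store := fun _ _ => None.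

Definition upd_loc (l : locals) (x : nat) (v : value) : locals :=
  fun y => if y == x then Some v else l y.
Definition upd_store (st : store) (a : seq nat) (f : nat) (v : value) : store :=
  fun a' f' => if (a' == a) && (f' == f) then Some v else st a' f'.

Definition default_val (t : ty) : value :=
  match t with TInt => VInt 0 | TBool => VBool false | TArr => VArr [::] | TVoid => VVoid end.

Definition find_iface (Lint : seq interface) (n : nat) : option interface :=
  ohead [seq I <- Lint | i_name I == n].

Definition field_type (Lint : seq interface) (n f : nat) : option ty :=
  match find_iface Lint n with
  | Some Ifc => option_map snd (ohead [seq p <- i_fields Ifc | p.1 == f])
  | None => None
  end.

Definition resolve_slot (nd : system) (addr : seq nat) (slot : option nat)
  : option (seq nat * nat) :=
  match nd with SNode k p _ =>
    match slot with
    | None => match p with Some i => Some (addr, i) | None => None end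
    | Some r => if r < size (c_req k) then Some (rcons addr r, nth 0 (c_req k) r) else None
    end
  end.

Definition eval_binop (op : binop) (v1 v2 : value) : option value :=
  match op, v1, v2 with
  | OAdd, VInt a, VInt b => Some (VInt (a + b)%Z)
  | OSub, VInt a, VInt b => Some (VInt (a - b)%Z)
  | OMul, VInt a, VInt b => Some (VInt (a * b)%Z)
  | ODiv, VInt a, VInt b => if Z.eqb b 0 then None else Some (VInt (Z.div a b))
  | OMod, VInt a, VInt b => if Z.eqb b 0 then None else Some (VInt (Z.modulo a b))
  | OLt, VInt a, VInt b => Some (VBool (Z.ltb a b))
  | OLe, VInt a, VInt b => Some (VBool (Z.leb a b))
  | OEq, VInt a, VInt b => Some (VBool (Z.eqb a b))
  | OEq, VBool a, VBool b => Some (VBool (a == b))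
  | OAnd, VBool a, VBool b => Some (VBool (a && b))
  | OOr, VBool a, VBool b => Some (VBool (a || b))
  | _, _, _ => None
  end.

Definition in_range (i : Z) (s : seq Z) : bool :=
  Z.leb 0 i && (Z.to_nat i < size s).

Fixpoint eval_expr (Lint : seq interface) (inp : seq bool) (nd : system)
  (addr : seq nat) (loc : locals) (st : store) (e : expr) : option value :=
  let ev := eval_expr Lint inp nd addr loc st in
  match e with
  | EInt z => Some (VInt z)
  | EBool b => Some (VBool b)
  | EVar x => loc x
  | EInput k => if k < size inp then Some (VBool (nth false inp k)) else None
  | EField slot f =>
      match resolve_slot nd addr slot with
      | Some (a, i) =>
          match field_type Lint i f with
          | Some t => match st a f with Some v => Some v | None => Some (default_val t) end
          | None => None
          end
      | None => None
      end
  | EBin op e1 e2 =>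
      match ev e1, ev e2 with Some v1, Some v2 => eval_binop op v1 v2 | _, _ => None end
  | ENot e1 => match ev e1 with Some (VBool b) => Some (VBool (~~ b)) | _ => None end
  | ENewArr e1 =>
      match ev e1 with
      | Some (VInt n) => if Z.leb 0 n then Some (VArr (nseq (Z.to_nat n) 0%Z)) else None
      | _ => None end
  | EIndex a i =>
      match ev a, ev i with
      | Some (VArr s), Some (VInt j) =>
          if in_range j s then Some (VInt (nth 0%Z s (Z.to_nat j))) else None
      | _, _ => None end
  | ELen a => match ev a with Some (VArr s) => Some (VInt (Z.of_nat (size s))) | _ => None end
  end.

Fixpoint eval_args (Lint : seq interface) (inp : seq bool) (nd : system)
  (addr : seq nat) (loc : locals) (st : store) (es : seq expr) : option (seq value) :=
  match es with
  | [::] => Some [::]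
  | e :: es' =>
      match eval_expr Lint inp nd addr loc st e, eval_args Lint inp nd addr loc st es' with
      | Some v, Some vs => Some (v :: vs)
      | _, _ => None
      end
  end.

Fixpoint bind_params (xs : seq nat) (vs : seq value) : locals :=
  match xs, vs with
  | x :: xs', v :: vs' => upd_loc (bind_params xs' vs') x v
  | _, _ => empty_locals
  end.

(* Code of (the reduced copy) [nd] for function [fn]: only the code of the
   interface it implements is available (all code for the root). *)
Definition lookup_code (nd : system) (fn : nat) : option fundef :=
  match nd with SNode k p _ =>
    ohead [seq fd <- c_code k | (fd_name fd == fn) &&
             (if p is Some i then fd_iface fd == i else true)]
  end.

Definition lookup_call (Lint : seq interface) (nd : system) (iname fn n : nat)
  : option fundef :=
  match find_iface Lint iname with
  | Some Ifc =>
      if has (fun pr => (fp_name pr == fn) && (size (fp_params pr) == n)) (i_funs Ifc) then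
        match lookup_code nd fn with
        | Some fd => if size (fd_params fd) == n then Some fd else None
        | None => None
        end
      else None
  | None => None
  end.

Inductive outcome :=
| ONormal (loc : locals) (st : store)
| OReturn (v : value) (st : store)
| OOutput (z : Z)        (* the output statement was executed; the run ends *)
| OStuck
| OTimeout.

Definition upd_idx (s : seq Z) (j : Z) (z : Z) : seq Z :=
  set_nth 0%Z s (Z.to_nat j) z.

Fixpoint exec (fuel : nat) (Lint : seq interface) (inp : seq bool) (nd : system)
  (addr : seq nat) (loc : locals) (st : store) (s : stmt) : outcome :=
  match fuel with
  | 0 => OTimeout
  | fuel'.+1 =>
    let ev := eval_expr Lint inp nd addr loc st in
    match s with
    | SSkip => ONormal loc st
    | SAssign x e => match ev e with Some v => ONormal (upd_loc loc x v) st | None => OStuck end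
    | SAssignIdx x i e =>
        match loc x, ev i, ev e with
        | Some (VArr a), Some (VInt j), Some (VInt z) =>
            if in_range j a then ONormal (upd_loc loc x (VArr (upd_idx a j z))) st else OStuck
        | _, _, _ => OStuck
        end
    | SFieldAssign slot f e =>
        match resolve_slot nd addr slot, ev e with
        | Some (a, i), Some v =>
            match field_type Lint i f with
            | Some _ => ONormal loc (upd_store st a f v)
            | None => OStuck
            end
        | _, _ => OStuck
        end
    | SSeq s1 s2 =>
        match exec fuel' Lint inp nd addr loc st s1 with
        | ONormal loc' st' => exec fuel' Lint inp nd addr loc' st' s2
        | o => o
        end
    | SIf c s1 s2 =>
        match ev c with
        | Some (VBool b) => exec fuel' Lint inp nd addr loc st (if b then s1 else s2)
        | _ => OStuck
        end
    | SWhile c b =>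
        match ev c with
        | Some (VBool true) => exec fuel' Lint inp nd addr loc st (SSeq b (SWhile c b))
        | Some (VBool false) => ONormal loc st
        | _ => OStuck
        end
    | SCall x r fn args =>
        match nd with SNode k _ ch =>
          if r < size ch then
            let child := nth dummy_sys ch r in
            match eval_args Lint inp nd addr loc st args with
            | Some vs =>
                match lookup_call Lint child (nth 0 (c_req k) r) fn (size vs) with
                | Some fd =>
                    match exec fuel' Lint inp child (rcons addr r)
                            (bind_params (fd_params fd) vs) st (fd_body fd) with
                    | OReturn v st' => ONormal (upd_loc loc x v) st'
                    | ONormal _ st' => ONormal (upd_loc loc x VVoid) st'
                    | OOutput z => OOutput z
                    | OStuck => OStuck
                    | OTimeout => OTimeout
                    end
                | None => OStuck
                end
            | None => OStuck
            end
          else OStuck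
        end
    | SReturn e => match ev e with Some v => OReturn v st | None => OStuck end
    | SOutput e => match ev e with Some (VInt z) => OOutput z | _ => OStuck end
    end
  end.

Definition run (fuel : nat) (Lint : seq interface) (inp : seq bool) (sys : system) : outcome :=
  match lookup_code sys main_fn with
  | Some fd => exec fuel Lint inp sys [::] empty_locals empty_store (fd_body fd)
  | None => OStuck
  end.

Definition outputs (Lint : seq interface) (sys : system) (i : seq bool) (o : Z) : Prop :=
  exists fuel, run fuel Lint i sys = OOutput o.

(* requirements: pairs (truth assignment to x_1..x_n, output) *)
Definition requirements := seq (seq bool * Z).

Definition working (Lint : seq interface) (R : requirements) (sys : system) : Prop :=
  forall p, mem_seq p R -> outputs Lint sys p.1 p.2.

Record instance := Instance {
  inst_nvars : nat;
  inst_R : requirements;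
  inst_Lint : seq interface;
  inst_Lcomp : seq component;
  inst_c : component }.

Definition wf_libs (Lint : seq interface) (Lcomp : seq component) : Prop :=
  (forall I1 I2, mem_seq I1 Lint -> mem_seq I2 Lint -> i_name I1 = i_name I2 -> I1 = I2) /\
  (forall k, mem_seq k Lcomp -> forall n, mem_seq n (c_prov k ++ c_req k) ->
     exists I, mem_seq I Lint /\ i_name I = n) /\
  (forall k, mem_seq k Lcomp -> forall I, mem_seq I Lint -> mem_seq (i_name I) (c_prov k) ->
     forall pr, mem_seq pr (i_funs I) ->
       exists fd, mem_seq fd (c_code k) /\ fd_iface fd = i_name I /\
         fd_name fd = fp_name pr /\ size (fd_params fd) = size (fp_params pr)).

Definition valid_instance (I : instance) : Prop :=
  (forall p, mem_seq p (inst_R I) -> size p.1 = inst_nvars I) /\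
  wf_libs (inst_Lint I) (inst_Lcomp I) /\
  mem_seq (inst_c I) (inst_Lcomp I) /\
  (exists fd, mem_seq fd (c_code (inst_c I)) /\ fd_name fd = main_fn).

(* The correct outputs of ESCreate ([None] stands for the symbol ⊥). *)
Definition ESCreate_correct (Rew : system -> nat) (I : instance) (a : option system) : Prop :=
  let ok sys := valid_system (inst_Lcomp I) (inst_c I) sys /\ working (inst_Lint I) (inst_R I) sys in
  match a with
  | None => ~ exists sys, ok sys
  | Some sys => ok sys /\ forall sys', ok sys' -> Rew sys <= Rew sys'
  end.

Fixpoint enc_pos (p : positive) : seq bool :=
  match p with
  | xH => [:: false]
  | xO q => [:: true; false] ++ enc_pos q
  | xI q => [:: true; true] ++ enc_pos q
  end.
Definition enc_N (n : N) : seq bool :=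
  match n with N0 => [:: false] | Npos p => true :: enc_pos p end.
Definition enc_nat (n : nat) : seq bool := enc_N (N.of_nat n).
Definition enc_Z (z : Z) : seq bool :=
  match z with
  | Z0 => [:: false; false]
  | Zpos p => true :: enc_pos p
  | Zneg p => [:: false; true] ++ enc_pos p
  end.
Definition enc_bool (b : bool) : seq bool := [:: b].
Fixpoint enc_seq (T : Type) (f : T -> seq bool) (s : seq T) : seq bool :=
  match s with [::] => [:: false] | x :: s' => true :: f x ++ enc_seq f s' end.
Definition enc_option (T : Type) (f : T -> seq bool) (o : option T) : seq bool :=
  match o with None => [:: false] | Some x => true :: f x end.
Definition enc_pair (A B : Type) (f : A -> seq bool) (g : B -> seq bool) (p : A * B) :=
  f p.1 ++ g p.2.

Definition enc_ty (t : ty) : seq bool :=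
  enc_nat (match t with TInt => 0 | TBool => 1 | TArr => 2 | TVoid => 3 end).
Definition enc_binop (o : binop) : seq bool :=
  enc_nat (match o with OAdd => 0 | OSub => 1 | OMul => 2 | ODiv => 3 | OMod => 4
                      | OLt => 5 | OLe => 6 | OEq => 7 | OAnd => 8 | OOr => 9 end).

Fixpoint enc_expr (e : expr) : seq bool :=
  match e with
  | EInt z => enc_nat 0 ++ enc_Z z
  | EBool b => enc_nat 1 ++ enc_bool b
  | EVar x => enc_nat 2 ++ enc_nat x
  | EInput k => enc_nat 3 ++ enc_nat k
  | EField s f => enc_nat 4 ++ enc_option enc_nat s ++ enc_nat f
  | EBin o e1 e2 => enc_nat 5 ++ enc_binop o ++ enc_expr e1 ++ enc_expr e2
  | ENot e1 => enc_nat 6 ++ enc_expr e1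
  | ENewArr e1 => enc_nat 7 ++ enc_expr e1
  | EIndex a i => enc_nat 8 ++ enc_expr a ++ enc_expr i
  | ELen a => enc_nat 9 ++ enc_expr a
  end.

Fixpoint enc_stmt (s : stmt) : seq bool :=
  match s with
  | SSkip => enc_nat 0
  | SAssign x e => enc_nat 1 ++ enc_nat x ++ enc_expr e
  | SAssignIdx x i e => enc_nat 2 ++ enc_nat x ++ enc_expr i ++ enc_expr e
  | SFieldAssign sl f e => enc_nat 3 ++ enc_option enc_nat sl ++ enc_nat f ++ enc_expr e
  | SSeq s1 s2 => enc_nat 4 ++ enc_stmt s1 ++ enc_stmt s2
  | SIf c s1 s2 => enc_nat 5 ++ enc_expr c ++ enc_stmt s1 ++ enc_stmt s2
  | SWhile c b => enc_nat 6 ++ enc_expr c ++ enc_stmt b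
  | SCall x r fn args => enc_nat 7 ++ enc_nat x ++ enc_nat r ++ enc_nat fn ++ enc_seq enc_expr args
  | SReturn e => enc_nat 8 ++ enc_expr e
  | SOutput e => enc_nat 9 ++ enc_expr e
  end.

Definition enc_fproto (p : fproto) : seq bool :=
  enc_nat (fp_name p) ++ enc_ty (fp_ret p) ++ enc_seq enc_ty (fp_params p).
Definition enc_interface (I : interface) : seq bool :=
  enc_nat (i_name I) ++ enc_seq enc_fproto (i_funs I) ++
  enc_seq (enc_pair enc_nat enc_ty) (i_fields I).
Definition enc_fundef (fd : fundef) : seq bool :=
  enc_nat (fd_iface fd) ++ enc_nat (fd_name fd) ++ enc_seq enc_nat (fd_params fd) ++
  enc_stmt (fd_body fd).
Definition enc_component (k : component) : seq bool :=
  enc_nat (c_label k) ++ enc_seq enc_nat (c_prov k) ++ enc_seq enc_nat (c_req k) ++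
  enc_seq enc_fundef (c_code k).

Fixpoint enc_system (sys : system) : seq bool :=
  match sys with
  | SNode k p ch =>
      enc_component k ++ enc_option enc_nat p ++
      (fix encs (l : seq system) : seq bool :=
         match l with [::] => [:: false] | x :: l' => true :: enc_system x ++ encs l' end) ch
  end.

Definition enc_instance (I : instance) : seq bool :=
  enc_nat (inst_nvars I) ++
  enc_seq (enc_pair (enc_seq enc_bool) enc_Z) (inst_R I) ++
  enc_seq enc_interface (inst_Lint I) ++
  enc_seq enc_component (inst_Lcomp I) ++
  enc_component (inst_c I).

Definition enc_answer (a : option system) : seq bool := enc_option enc_system a.

Inductive move := MLeft | MRight | MStay.

(* A deterministic Turing machine with a two-way infinite tape, states
   0..tm_nst (start state 0) and tape alphabet 0..tm_nsym+2, where 0 is the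
   blank and 1, 2 encode the bits false, true.  [tm_delta q a = None] means
   the machine halts. *)
Record TM := mkTM {
  tm_nst : nat;
  tm_nsym : nat;
  tm_delta : 'I_tm_nst.+1 -> 'I_tm_nsym.+3 ->
             option ('I_tm_nst.+1 * 'I_tm_nsym.+3 * move) }.

Definition tsym (M : TM) := 'I_(tm_nsym M).+3.
Definition tstate (M : TM) := 'I_(tm_nst M).+1.
Definition blank (M : TM) : tsym M := ord0.
Definition bitsym (M : TM) (b : bool) : tsym M := inord (if b then 2 else 1).

Record config (M : TM) := Config {
  cstate : tstate M;
  cleft : seq (tsym M);    (* cells left of the head, nearest first *)
  chead : tsym M;
  cright : seq (tsym M) }. (* cells right of the head, nearest first *)

Definition step (M : TM) (c : config M) : option (config M) :=
  match tm_delta (cstate c) (chead c) with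
  | None => None
  | Some (q, a, m) =>
      Some (match m with
            | MStay => Config q (cleft c) a (cright c)
            | MLeft => match cleft c with
                       | [::] => Config q [::] (blank M) (a :: cright c)
                       | x :: l => Config q l x (a :: cright c)
                       end
            | MRight => match cright c with
                        | [::] => Config q (a :: cleft c) (blank M) [::]
                        | x :: r => Config q (a :: cleft c) x r
                        end
            end)
  end.

(* [run_steps t c = Some c'] iff started in c the machine halts in c'
   after at most t steps *)
Fixpoint run_steps (M : TM) (t : nat) (c : config M) : option (config M) :=
  match step c with
  | None => Some c
  | Some c' => match t with 0 => None | t'.+1 => run_steps t' c' end
  end.

Definition init_config (M : TM) (w : seq bool) : config M :=
  match w with
  | [::] => Config (@ord0 (tm_nst M)) [::] (blank M) [::]
  | b :: w' => Config (@ord0 (tm_nst M)) [::] (bitsym M b) (map (bitsym M) w')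
  end.

(* output: the maximal string of bit symbols starting at the head *)
Fixpoint read_bits (M : TM) (s : seq (tsym M)) : seq bool :=
  match s with
  | [::] => [::]
  | a :: s' => if val a == 1 then false :: read_bits s'
               else if val a == 2 then true :: read_bits s' else [::]
  end.
Definition tm_output (M : TM) (c : config M) : seq bool := read_bits (chead c :: cright c).

Definition tm_computes (M : TM) (w w' : seq bool) : Prop :=
  exists t c, run_steps t (init_config M w) = Some c /\ tm_output c = w'.

Definition poly_time_computable (A B : Type) (encA : A -> seq bool)
  (encB : B -> seq bool) (f : A -> B) : Prop :=
  exists (M : TM) (d : nat), forall x, exists c,
    run_steps (d * (size (encA x)).+1 ^ d) (init_config M (encA x)) = Some c /\
    tm_output c = encB (f x).

Definition solves_ESCreate (Rew : system -> nat) (M : TM) : Prop :=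
  forall I, valid_instance I ->
    exists a, ESCreate_correct Rew I a /\ tm_computes M (enc_instance I) (enc_answer a).

(* Main.v *)
Require Import Defs.
From Stdlib Require Import ZArith Lia.
From mathcomp Require Import all_boot.
Set Implicit Arguments.
Unset Strict Implicit.
Unset Printing Implicit Defensive.


Lemma exec_mono : forall f Lint inp nd addr loc st s o,
  exec f Lint inp nd addr loc st s = o -> o <> OTimeout ->
  forall f', f <= f' -> exec f' Lint inp nd addr loc st s = o.
Proof.
elim=> [|f IH] Lint inp nd addr loc st s o /=; first by move=> <-.
move=> E NT [|f'] //= Hf.
destruct s as [| x e | x i e | sl fl e | s1 s2 | c s1 s2 | c b | x r fn args | e | e] => //.
- destruct (exec f Lint inp nd addr loc st s1) eqn:E1;
  try (rewrite (IH _ _ _ _ _ _ _ _ E1 ltac:(discriminate) _ Hf); subst; done).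
  + rewrite (IH _ _ _ _ _ _ _ _ E1 ltac:(discriminate) _ Hf).
    exact: (IH _ _ _ _ _ _ _ _ E NT _ Hf).
  + subst; done.
- destruct (eval_expr Lint inp nd addr loc st c) as [[]|] => //.
  exact: (IH _ _ _ _ _ _ _ _ E NT _ Hf).
- destruct (eval_expr Lint inp nd addr loc st c) as [[? | [] | ? | ] | ] => //.
  exact: (IH _ _ _ _ _ _ _ _ E NT _ Hf).
- destruct nd as [k p ch].
  destruct (r < size ch) => //.
  destruct (eval_args Lint inp (SNode k p ch) addr loc st args) as [vs|] => //.
  destruct (lookup_call Lint (nth dummy_sys ch r) (nth 0 (c_req k) r) fn (size vs)) as [fd|] => //.
  destruct (exec f Lint inp (nth dummy_sys ch r) (rcons addr r) (bind_params (fd_params fd) vs) st (fd_body fd)) eqn:E1;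
  try (rewrite (IH _ _ _ _ _ _ _ _ E1 ltac:(discriminate) _ Hf); done).
  subst; done.
Qed.

Section ExSec.
Variables (Lint : seq interface) (inp : seq bool) (nd : system) (addr : seq nat).

Definition Ex (s : stmt) (l : locals) (st : store) (o : outcome) : Prop :=
  o <> OTimeout /\ exists f, exec f Lint inp nd addr l st s = o.

Definition ev l st e := eval_expr Lint inp nd addr l st e.

Lemma Ex_det s l st o1 o2 : Ex s l st o1 -> Ex s l st o2 -> o1 = o2.
Proof.
move=> [N1 [f1 E1]] [N2 [f2 E2]].
rewrite -(exec_mono E1 N1 (leq_maxl f1 f2)).
by rewrite -(exec_mono E2 N2 (leq_maxr f1 f2)).
Qed.

Lemma Ex_assign x e l st v : ev l st e = Some v ->
  Ex (SAssign x e) l st (ONormal (upd_loc l x v) st).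
Proof. by move=> H; split=> //; exists 1; rewrite /= -/(ev l st e) H. Qed.

Lemma Ex_skip l st : Ex SSkip l st (ONormal l st).
Proof. by split=> //; exists 1. Qed.

Lemma Ex_seq s1 s2 l st l1 st1 o : Ex s1 l st (ONormal l1 st1) -> Ex s2 l1 st1 o ->
  Ex (SSeq s1 s2) l st o.
Proof.
move=> [_ [f1 E1]] [N [f2 E2]]; split=> //; exists (maxn f1 f2).+1 => /=.
rewrite (exec_mono E1 ltac:(discriminate) (leq_maxl f1 f2)).
exact: (exec_mono E2 N (leq_maxr f1 f2)).
Qed.

Lemma Ex_seq_out s1 s2 l st z : Ex s1 l st (OOutput z) -> Ex (SSeq s1 s2) l st (OOutput z).
Proof.
move=> [_ [f1 E1]]; split=> //; exists f1.+1 => /=; by rewrite E1.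
Qed.

Lemma Ex_if c s1 s2 l st b o : ev l st c = Some (VBool b) ->
  Ex (if b then s1 else s2) l st o -> Ex (SIf c s1 s2) l st o.
Proof.
move=> H [N [f E]]; split=> //; exists f.+1 => /=; by rewrite -/(ev l st c) H.
Qed.

Lemma Ex_while_false c s l st : ev l st c = Some (VBool false) ->
  Ex (SWhile c s) l st (ONormal l st).
Proof. by move=> H; split=> //; exists 1 => /=; rewrite -/(ev l st c) H. Qed.

Lemma Ex_while_true c s l st l1 st1 o : ev l st c = Some (VBool true) ->
  Ex s l st (ONormal l1 st1) -> Ex (SWhile c s) l1 st1 o -> Ex (SWhile c s) l st o.
Proof.
move=> H H1 H2; have [N [f E]] := Ex_seq H1 H2.
split=> //; exists f.+1 => /=; by rewrite -/(ev l st c) H.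
Qed.

Lemma Ex_output e l st z : ev l st e = Some (VInt z) -> Ex (SOutput e) l st (OOutput z).
Proof. by move=> H; split=> //; exists 1 => /=; rewrite -/(ev l st e) H. Qed.

Lemma Ex_while (c : expr) (s : stmt) (st : store) (P : nat -> locals -> Prop)
  (Q : locals -> Prop) :
  (forall n l, P n l ->
     (ev l st c = Some (VBool false) /\ Q l) \/
     (ev l st c = Some (VBool true) /\ exists m l', m < n /\ Ex s l st (ONormal l' st) /\ P m l')) ->
  forall n l, P n l -> exists l', Ex (SWhile c s) l st (ONormal l' st) /\ Q l'.
Proof.
move=> H n; elim: n {-2}n (leqnn n) => [|n IH] m Hm l Hp.
- case: (H _ _ Hp) => [[Hc Hq]|[Hc [k [l' [Hk _]]]]].
  + by exists l; split=> //; apply: Ex_while_false.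
  + by move: Hk Hm; case: m {Hp} => // ; case: k.
- case: (H _ _ Hp) => [[Hc Hq]|[Hc [k [l' [Hk [Hs Hp']]]]]].
  + by exists l; split=> //; apply: Ex_while_false.
  + have [l'' [E Q'']] := IH k (leq_trans (leq_trans Hk Hm) (leqnn _)) l' Hp'.
    by exists l''; split=> //; apply: Ex_while_true Hs E.
Qed.

End ExSec.

Section Num.
Variable M : TM.
Definition KK : Z := (Z.of_nat (tm_nsym M) + 4)%Z.

Definition Nb (s : seq bool) : Z :=
  foldr (fun b acc => (if b then 3 else 2) + KK * acc)%Z 0%Z s.
Definition Ns (s : seq (tsym M)) : Z :=
  foldr (fun x acc => Z.of_nat (val x) + 1 + KK * acc)%Z 0%Z s.
Definition Pw (s : seq bool) : Z := (KK ^ Z.of_nat (size s))%Z.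

Lemma KK_gt : (4 <= KK)%Z. Proof. rewrite /KK; lia. Qed.

Lemma Pw_cons b s : Pw (b :: s) = (KK * Pw s)%Z.
Proof. by rewrite /Pw [size _]/= Nat2Z.inj_succ Z.pow_succ_r; lia. Qed.

Lemma Nb_cons b s : Nb (b :: s) = ((if b then 3 else 2) + KK * Nb s)%Z.
Proof. by []. Qed.

Lemma Nb_cat s t : Nb (s ++ t) = (Nb s + Pw s * Nb t)%Z.
Proof.
elim: s => [|b s IH]; first by rewrite /Pw /=; case: (Nb t).
rewrite cat_cons !Nb_cons Pw_cons IH; ring.
Qed.

Lemma Pw_cat s t : Pw (s ++ t) = (Pw s * Pw t)%Z.
Proof. by rewrite /Pw size_cat Nat2Z.inj_add Z.pow_add_r; lia. Qed.

Lemma Pw_nil : Pw [::] = 1%Z. Proof. by []. Qed.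

Lemma val_bitsym b : val (bitsym M b) = if b then 2 else 1.
Proof. by case: b; exact: inordK. Qed.

Lemma Ns_bits s : Ns (map (bitsym M) s) = Nb s.
Proof. elim: s => //= b s ->; rewrite val_bitsym; by case: b. Qed.

Lemma tsym_lt (x : tsym M) : (0 <= Z.of_nat (val x) /\ Z.of_nat (val x) + 1 < KK)%Z.
Proof.
have H : (nat_of_ord x < (tm_nsym M).+3)%coq_nat by apply/ltP.
change (val x) with (nat_of_ord x); rewrite /KK; lia.
Qed.

Lemma Ns_ge0 s : (0 <= Ns s)%Z.
Proof. elim: s => //= x s IH; have := @tsym_lt x; have := KK_gt; nia. Qed.

Lemma Nb_ge0 s : (0 <= Nb s)%Z.
Proof. elim: s => //= b s IH; have := KK_gt; case: b; nia. Qed.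

Lemma Ns_cons_pos x s : (0 < Ns (x :: s))%Z.
Proof. rewrite /=; have := @Ns_ge0 s; have := @tsym_lt x; have := KK_gt; nia. Qed.

Lemma Nb_cons_pos b s : (0 < Nb (b :: s))%Z.
Proof. rewrite /=; have := @Nb_ge0 s; have := KK_gt; case: b; nia. Qed.

Lemma Ns_div x s : (Ns (x :: s) / KK)%Z = Ns s.
Proof.
symmetry; apply: (Z.div_unique_pos _ _ _ (Z.of_nat (val x) + 1)).
  by have := @tsym_lt x; lia.
rewrite /=; lia.
Qed.

Lemma Ns_mod x s : (Ns (x :: s) mod KK)%Z = (Z.of_nat (val x) + 1)%Z.
Proof.
symmetry; apply: (Z.mod_unique_pos _ _ (Ns s)).
  by have := @tsym_lt x; lia.
rewrite /=; lia.
Qed.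

Lemma Nb_div b s : (Nb (b :: s) / KK)%Z = Nb s.
Proof.
symmetry; apply: (Z.div_unique_pos _ _ _ (if b then 3 else 2)%Z).
  by have := KK_gt; case: b; lia.
rewrite /=; lia.
Qed.

Lemma Ns_eq0 s : (Ns s = 0)%Z <-> s = [::].
Proof.
case: s => [|x s] //; split=> // H; have := @Ns_cons_pos x s; lia.
Qed.

End Num.

Definition vq := 1. Definition vh := 2. Definition vl := 3. Definition vr := 4.
Definition vrun := 5. Definition vD := 6. Definition va := 7. Definition vm := 8.
Definition vx := 9. Definition vp := 10. Definition vxa := 11. Definition vxm := 12.
Definition vb := 13.

Lemma upd_loc_E l x v y : upd_loc l x v y = if y == x then Some v else l y.
Proof. by []. Qed.

Section Prog.
Variable M : TM.
Variables (Lint : seq interface) (inp : seq bool) (nd : system) (addr : seq nat).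
Notation Ex := (Ex Lint inp nd addr).
Notation ev := (ev Lint inp nd addr).
Notation K := (KK M).

Definition mvL (a' : Z) : stmt :=
  SSeq (SAssign vr (EBin OAdd (EInt (a' + 1)) (EBin OMul (EInt K) (EVar vr))))
  (SIf (EBin OEq (EVar vl) (EInt 0)) (SAssign vh (EInt 0))
     (SSeq (SAssign vh (EBin OSub (EBin OMod (EVar vl) (EInt K)) (EInt 1)))
           (SAssign vl (EBin ODiv (EVar vl) (EInt K))))).
Definition mvR (a' : Z) : stmt :=
  SSeq (SAssign vl (EBin OAdd (EInt (a' + 1)) (EBin OMul (EInt K) (EVar vl))))
  (SIf (EBin OEq (EVar vr) (EInt 0)) (SAssign vh (EInt 0))
     (SSeq (SAssign vh (EBin OSub (EBin OMod (EVar vr) (EInt K)) (EInt 1)))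
           (SAssign vr (EBin ODiv (EVar vr) (EInt K))))).
Definition mv (a' : Z) (m : move) : stmt :=
  match m with MStay => SAssign vh (EInt a') | MLeft => mvL a' | MRight => mvR a' end.

Definition act (d : option (tstate M * tsym M * move)) : stmt :=
  match d with
  | None => SAssign vrun (EBool false)
  | Some (q', a', m) => SSeq (SAssign vq (EInt (Z.of_nat (val q')))) (mv (Z.of_nat (val a')) m)
  end.

Definition zn (n : nat) := Z.of_nat n.

Definition chain (ps : seq (tstate M * tsym M)) : stmt :=
  foldr (fun ij rest =>
    SIf (EBin OAnd (EBin OEq (EVar vq) (EInt (zn (val ij.1))))
                   (EBin OEq (EVar vh) (EInt (zn (val ij.2)))))
        (act (tm_delta ij.1 ij.2)) rest) SSkip ps.

Definition encs (l : locals) (c : config M) (b : bool) : Prop :=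
  [/\ l vq = Some (VInt (zn (val (cstate c)))), l vh = Some (VInt (zn (val (chead c)))),
      l vl = Some (VInt (Ns (cleft c))), l vr = Some (VInt (Ns (cright c))) &
      l vrun = Some (VBool b)].

Lemma zn_eqb n m : Z.eqb (zn n) (zn m) = (n == m).
Proof.
apply/idP/idP => [/Z.eqb_eq /Nat2Z.inj -> //| /eqP ->]; exact: Z.eqb_refl.
Qed.

Lemma chain_ok ps l st o q a : (q, a) \in ps ->
  l vq = Some (VInt (zn (val q))) -> l vh = Some (VInt (zn (val a))) ->
  Ex (act (tm_delta q a)) l st o -> Ex (chain ps) l st o.
Proof.
move=> Hin Hq Ha Hact; elim: ps Hin => [|[i j] ps IH] //=.
rewrite in_cons => Hor.
apply: (Ex_if (b := (val q == val i) && (val a == val j))).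
  by rewrite /ev /= Hq Ha /= !zn_eqb.
case: (boolP ((val q == val i) && (val a == val j))) => [/andP [/eqP E1 /eqP E2]|Hne].
  by move/val_inj: E1 => <-; move/val_inj: E2 => <-.
apply: IH; case/orP: Hor => // /eqP [E1 E2].
by rewrite E1 E2 !eqxx in Hne.
Qed.

Lemma KK_neq0 : Z.eqb K 0 = false.
Proof. apply/Z.eqb_neq; have := @KK_gt M; lia. Qed.

Ltac evt H := rewrite /ev /= ?upd_loc_E /=; rewrite ?H /= ?KK_neq0 /=.

Lemma Ns_cons' (x : tsym M) s : Ns (x :: s) = (Z.of_nat (val x) + 1 + K * Ns s)%Z.
Proof. by []. Qed.

Lemma Ns_neq0 (x : tsym M) s : Z.eqb (Ns (x :: s)) 0 = false.
Proof. apply/Z.eqb_neq; have := @Ns_cons_pos M x s; lia. Qed.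

Lemma Ns_head (x : tsym M) s : (Ns (x :: s) mod K - 1)%Z = Z.of_nat (val x).
Proof. rewrite Ns_mod; lia. Qed.

Arguments Ns : simpl never.

Lemma act_ok l st c : encs l c true ->
  match step c with
  | None => exists l', Ex (act (tm_delta (cstate c) (chead c))) l st (ONormal l' st) /\ encs l' c false
  | Some c' => exists l', Ex (act (tm_delta (cstate c) (chead c))) l st (ONormal l' st) /\ encs l' c' true
  end.
Proof.
case: c => q L h R; rewrite /step /=; case: (tm_delta q h) => [[[q' a'] m]|] [Hq Hh Hl Hr Hrun]; simpl in *.
- case: m => /=.
  +
    case: L Hl => [|x L] Hl.
    * eexists; split.
        apply: Ex_seq; first by apply: Ex_assign.
        apply: Ex_seq; first by apply: Ex_assign; evt Hr.
        apply: (Ex_if (b := true)); first by evt Hl.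
        by apply: Ex_assign.
      by split; rewrite ?upd_loc_E //= Ns_cons'.
    * eexists; split.
        apply: Ex_seq; first by apply: Ex_assign.
        apply: Ex_seq; first by apply: Ex_assign; evt Hr.
        apply: (Ex_if (b := false)); first by evt Hl; rewrite Ns_neq0.
        cbv iota.
        apply: Ex_seq; first by apply: Ex_assign; evt Hl.
        by apply: Ex_assign; evt Hl.
      by split; rewrite ?upd_loc_E //= ?Ns_cons' ?Ns_head ?Ns_div.
  +
    case: R Hr => [|x R] Hr.
    * eexists; split.
        apply: Ex_seq; first by apply: Ex_assign.
        apply: Ex_seq; first by apply: Ex_assign; evt Hl.
        apply: (Ex_if (b := true)); first by evt Hr.
        by apply: Ex_assign.
      by split; rewrite ?upd_loc_E //= Ns_cons'.
    * eexists; split.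
        apply: Ex_seq; first by apply: Ex_assign.
        apply: Ex_seq; first by apply: Ex_assign; evt Hl.
        apply: (Ex_if (b := false)); first by evt Hr; rewrite Ns_neq0.
        cbv iota.
        apply: Ex_seq; first by apply: Ex_assign; evt Hr.
        by apply: Ex_assign; evt Hr.
      by split; rewrite ?upd_loc_E //= ?Ns_cons' ?Ns_head ?Ns_div.
  + eexists; split.
      apply: Ex_seq; first by apply: Ex_assign.
      by apply: Ex_assign.
    by split; rewrite ?upd_loc_E.
- eexists; split; first by apply: Ex_assign.
  by split; rewrite ?upd_loc_E.
Qed.

Definition allps : seq (tstate M * tsym M) :=
  [seq (i, j) | i <- enum 'I_(tm_nst M).+1, j <- enum 'I_(tm_nsym M).+3].

Definition loop := SWhile (EVar vrun) (chain allps).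

Lemma body_ok l st c : encs l c true ->
  match step c with
  | None => exists l', Ex (chain allps) l st (ONormal l' st) /\ encs l' c false
  | Some c' => exists l', Ex (chain allps) l st (ONormal l' st) /\ encs l' c' true
  end.
Proof.
move=> H; have := act_ok st H.
have Hin : (cstate c, chead c) \in allps.
  by apply/allpairsP; exists (cstate c, chead c); rewrite !mem_enum.
case: H => Hq Hh _ _ _.
case: (step c) => [c'|] [l' [E H']]; exists l'; split=> //; exact: chain_ok Hin Hq Hh E.
Qed.

Lemma run_steps_eq k (c : config M) : run_steps k c =
  match step c with None => Some c | Some c' => match k with 0 => None | k'.+1 => run_steps k' c' end end.
Proof. by case: k. Qed.

Lemma loop_ok t c cf l st : run_steps t c = Some cf -> encs l c true ->
  exists l', Ex loop l st (ONormal l' st) /\ encs l' cf false.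
Proof.
move=> Hr He.
pose P n l := (n = 0 /\ encs l cf false) \/
              (exists k c, n = k.+1 /\ encs l c true /\ run_steps k c = Some cf).
apply: (@Ex_while _ _ _ _ _ _ st P (fun l => encs l cf false)); last first.
  by right; exists t, c.
move=> n l0 [[_ H]|[k [c0 [-> [H Hk]]]]].
  by left; split=> //; case: H => _ _ _ _ Hrun; rewrite /ev /= Hrun.
right; split; first by case: H => _ _ _ _ Hrun; rewrite /ev /= Hrun.
have := body_ok st H; move: Hk; rewrite run_steps_eq.
case: (step c0) => [c'|] Hk [l' [E H']].
- case: k Hk => [|k] // Hk.
  exists k.+1, l'; split=> //; split=> //; right; by exists k, c'.
- case: Hk => Hk; subst c0.
  exists 0, l'; split=> //; split=> //; by left.
Qed.

End Prog.

Definition cP (P : stmt) := Component 0 [::] [::] [:: FunDef 0 0 [::] P].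
Definition instP (P : stmt) := Instance 0 [:: ([::], 0%Z)] [::] [:: cP P] (cP P).
Definition Cpre : seq bool := enc_nat 0 ++ [:: false; false; true] ++ enc_nat 0 ++ enc_nat 0 ++ [:: false].
Definition Apre : seq bool :=
  enc_nat 0 ++ enc_seq (enc_pair (enc_seq enc_bool) enc_Z) [:: ([::], 0%Z)] ++
  enc_seq enc_interface [::] ++ [:: true] ++ Cpre.
Definition Bmid : seq bool := [:: false; false] ++ Cpre.
Definition Cend : seq bool := [:: false].

Lemma enc_instP P : enc_instance (instP P) = Apre ++ enc_stmt P ++ Bmid ++ enc_stmt P ++ Cend.
Proof. by rewrite /enc_instance /= -!catA /=. Qed.



Lemma Ex_assign' Lint inp nd addr x e l st v v' : ev Lint inp nd addr l st e = Some v -> v = v' ->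
  Ex Lint inp nd addr (SAssign x e) l st (ONormal (upd_loc l x v') st).
Proof. by move=> H <-; apply: Ex_assign. Qed.

Definition agree (l l0 : locals) (xs : seq nat) := forall y, y \notin xs -> l y = l0 y.

Lemma agree_upd l l0 xs x v : agree l l0 xs -> x \in xs -> agree (upd_loc l x v) l0 xs.
Proof.
move=> H Hx y Hy; rewrite upd_loc_E; case: eqP => [E|_]; last exact: H.
by subst; rewrite Hx in Hy.
Qed.

Lemma agree_refl l xs : agree l l xs. Proof. by []. Qed.

Lemma agree_trans l1 l2 l3 xs ys : agree l1 l2 xs -> agree l2 l3 ys -> {subset xs <= ys} ->
  agree l1 l3 ys.
Proof.
move=> H1 H2 S y Hy; rewrite H1 ?H2 //; apply/negP => /S; by rewrite (negbTE Hy).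
Qed.

Lemma xO_mod q : (Z.pos (xO q) mod 2 = 0)%Z.
Proof. rewrite Pos2Z.inj_xO; symmetry; apply: (Z.mod_unique_pos _ _ (Z.pos q)); lia. Qed.
Lemma xO_div q : (Z.pos (xO q) / 2 = Z.pos q)%Z.
Proof. rewrite Pos2Z.inj_xO; symmetry; apply: (Z.div_unique_pos _ _ _ 0); lia. Qed.
Lemma xI_mod q : (Z.pos (xI q) mod 2 = 1)%Z.
Proof. rewrite Pos2Z.inj_xI; symmetry; apply: (Z.mod_unique_pos _ _ (Z.pos q)); lia. Qed.
Lemma xI_div q : (Z.pos (xI q) / 2 = Z.pos q)%Z.
Proof. rewrite Pos2Z.inj_xI; symmetry; apply: (Z.div_unique_pos _ _ _ 1); lia. Qed.

Arguments Nb : simpl never.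
Arguments Pw : simpl never.
Arguments Ns : simpl never.

Lemma Nb_nil M : Nb M [::] = 0%Z. Proof. by []. Qed.

Arguments Apre : simpl never.
Arguments Bmid : simpl never.
Arguments Cend : simpl never.
Arguments Z.add : simpl never.
Arguments Z.mul : simpl never.
Arguments Z.sub : simpl never.
Arguments Z.modulo : simpl never.
Arguments Z.div : simpl never.

Section Build.
Variable M : TM.
Variables (Lint : seq interface) (inp : seq bool) (nd : system) (addr : seq nat).
Notation Ex := (Ex Lint inp nd addr).
Notation ev := (ev Lint inp nd addr).
Notation K := (KK M).
Notation Nb := (Nb M).
Notation Pw := (Pw M).

Definition appE va vm ea em :=
  SSeq (SAssign va (EBin OAdd (EVar va) (EBin OMul (EVar vm) ea)))
       (SAssign vm (EBin OMul (EVar vm) em)).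

Definition wr (l : locals) va vm s :=
  l va = Some (VInt (Nb s)) /\ l vm = Some (VInt (Pw s)).

Lemma appE_ok l st va vm ea em s s0 : va != vm -> wr l va vm s ->
  ev l st ea = Some (VInt (Nb s0)) ->
  ev (upd_loc l va (VInt (Nb (s ++ s0)))) st em = Some (VInt (Pw s0)) ->
  Ex (appE va vm ea em) l st
    (ONormal (upd_loc (upd_loc l va (VInt (Nb (s ++ s0)))) vm (VInt (Pw (s ++ s0)))) st).
Proof.
move=> Hne [Ha Hm] Hea Hem.
apply: Ex_seq.
  apply: (@Ex_assign' Lint inp nd addr _ _ _ _ _ (VInt (Nb (s ++ s0)))); first by rewrite /ev /= Ha Hm -/(ev l st ea) Hea.
  by rewrite Nb_cat.
apply: (@Ex_assign' Lint inp nd addr _ _ _ _ _ (VInt (Pw (s ++ s0)))).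
  rewrite /ev /= -/(ev _ st em) Hem upd_loc_E.
  by rewrite eq_sym (negbTE Hne) Hm.
by rewrite Pw_cat.
Qed.

Definition appc va vm (s0 : seq bool) := appE va vm (EInt (Nb s0)) (EInt (Pw s0)).

Lemma appc_ok l st va vm s s0 : va != vm -> wr l va vm s ->
  Ex (appc va vm s0) l st
    (ONormal (upd_loc (upd_loc l va (VInt (Nb (s ++ s0)))) vm (VInt (Pw (s ++ s0)))) st).
Proof. by move=> H1 H2; apply: appE_ok. Qed.

(* the loop appending enc_pos of x to the writer (xa, xm) *)
Definition posbody :=
  SSeq (SAssign vb (EBin OMod (EVar vx) (EInt 2)))
  (SSeq (appE vxa vxm (EBin OAdd (EInt 3) (EBin OMul (EInt K) (EBin OAdd (EVar vb) (EInt 2))))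
                      (EInt (K * K)))
        (SAssign vx (EBin ODiv (EVar vx) (EInt 2)))).
Definition posloop := SWhile (EBin OLt (EInt 1) (EVar vx)) posbody.

Lemma Pw2 b1 b2 : Pw [:: b1; b2] = (K * K)%Z.
Proof. by rewrite !Pw_cons Pw_nil Z.mul_1_r. Qed.

Lemma posloop_ok l0 st p s : l0 vx = Some (VInt (Z.pos p)) -> wr l0 vxa vxm s ->
  exists l', Ex posloop l0 st (ONormal l' st) /\
    (exists s', wr l' vxa vxm s' /\ s' ++ [:: false] = s ++ enc_pos p) /\
    agree l' l0 [:: vx; vb; vxa; vxm].
Proof.
move=> Hx0 Hw0.
pose P n l := exists p' s', n = Pos.to_nat p' /\ l vx = Some (VInt (Z.pos p')) /\
   wr l vxa vxm s' /\ s' ++ enc_pos p' = s ++ enc_pos p /\ agree l l0 [:: vx; vb; vxa; vxm].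
have: P (Pos.to_nat p) l0 by exists p, s; split=> //; split=> //; split=> //; split.
move/(@Ex_while Lint inp nd addr _ posbody st P
   (fun l => (exists s', wr l vxa vxm s' /\ s' ++ [:: false] = s ++ enc_pos p) /\
      agree l l0 [:: vx; vb; vxa; vxm])).
apply.
move=> n l [p' [s' [-> [Hx [[Ha Hm] [Hs Hag]]]]]].
case: p' Hx Hs => [q|q|] Hx Hs.
- right; split; first by rewrite /ev /= Hx.
  exists (Pos.to_nat q).
  eexists; split; first by rewrite Pos2Nat.inj_xI; apply/ltP; lia.
  split.
    apply: Ex_seq; first by apply: Ex_assign; rewrite /ev /= Hx.
    apply: Ex_seq.
      apply: (@appE_ok _ _ _ _ _ _ s' [:: true; true]) => //.
      + rewrite /ev /= ?upd_loc_E /= ?xI_mod !Nb_cons Nb_nil; do 2 f_equal; lia.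
      + by rewrite Pw2.
    by apply: Ex_assign; rewrite /ev /= !upd_loc_E /= Hx.
  exists q, (s' ++ [:: true; true]); split=> //; split; first by rewrite !upd_loc_E /= xI_div.
  split; first by split; rewrite !upd_loc_E.
  split; first by rewrite -catA.
  by do 4 (apply: agree_upd => //).
- right; split; first by rewrite /ev /= Hx.
  exists (Pos.to_nat q).
  eexists; split; first by rewrite Pos2Nat.inj_xO; apply/ltP; have := Pos2Nat.is_pos q; lia.
  split.
    apply: Ex_seq; first by apply: Ex_assign; rewrite /ev /= Hx.
    apply: Ex_seq.
      apply: (@appE_ok _ _ _ _ _ _ s' [:: true; false]) => //.
      + rewrite /ev /= ?upd_loc_E /= ?xO_mod !Nb_cons Nb_nil; do 2 f_equal; lia.
      + by rewrite Pw2.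
    by apply: Ex_assign; rewrite /ev /= !upd_loc_E /= Hx.
  exists q, (s' ++ [:: true; false]); split=> //; split; first by rewrite !upd_loc_E /= xO_div.
  split; first by split; rewrite !upd_loc_E.
  split; first by rewrite -catA.
  by do 4 (apply: agree_upd => //).
- left; split; first by rewrite /ev /= Hx.
  by split=> //; exists s'.
Qed.

Definition pwloop := SWhile (EBin OLt (EInt 0) (EVar vx))
  (SSeq (SAssign vx (EBin ODiv (EVar vx) (EInt K)))
        (SAssign vp (EBin OMul (EVar vp) (EInt K)))).

Lemma pwloop_ok l0 st s : l0 vx = Some (VInt (Nb s)) -> l0 vp = Some (VInt 1) ->
  exists l', Ex pwloop l0 st (ONormal l' st) /\ l' vp = Some (VInt (Pw s)) /\
    agree l' l0 [:: vx; vp].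
Proof.
move=> Hx0 Hp0.
pose P n l := exists i, n = size s - i /\ i <= size s /\ l vx = Some (VInt (Nb (drop i s))) /\
   l vp = Some (VInt (K ^ Z.of_nat i)%Z) /\ agree l l0 [:: vx; vp].
have: P (size s) l0 by exists 0; rewrite drop0 subn0.
move/(@Ex_while Lint inp nd addr _ _ st P
   (fun l => l vp = Some (VInt (Pw s)) /\ agree l l0 [:: vx; vp])).
apply.
move=> n l [i [-> [Hi [Hx [Hp Hag]]]]].
case: (ltnP i (size s)) => Hlt.
- right; split.
    rewrite /ev /= Hx (drop_nth false Hlt); congr (Some (VBool _)).
    by apply/Z.ltb_lt; apply: Nb_cons_pos.
  exists (size s - i.+1); eexists; split.
    by rewrite subnS ltn_predL subn_gt0.
  split.
    apply: Ex_seq; first by apply: Ex_assign; rewrite /ev /= Hx ?KK_neq0.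
    by apply: Ex_assign; rewrite /ev /= ?upd_loc_E /= Hp.
  exists i.+1; split=> //; split=> //; split.
    by rewrite !upd_loc_E /= (drop_nth false Hlt) Nb_div.
  split.
    rewrite upd_loc_E eqxx Nat2Z.inj_succ Z.pow_succ_r; last lia.
    by do 2 f_equal; lia.
  by do 2 (apply: agree_upd => //).
- left; have Hi' : i = size s by apply/eqP; rewrite eqn_leq Hi Hlt.
  rewrite Hi' drop_size in Hx; split; first by rewrite /ev /= Hx.
  by split=> //; rewrite Hp Hi'.
Qed.

Definition seqs (ss : seq stmt) : stmt := foldr SSeq SSkip ss.

Definition X0 : seq bool := enc_nat 4 ++ enc_nat 1 ++ enc_nat vD ++ enc_nat 0 ++ [:: true].

Definition Rest : stmt := seqs [::
  SAssign va (EInt 0); SAssign vm (EInt 1);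
  appc va vm Apre;
  SAssign vxa (EInt 0); SAssign vxm (EInt 1);
  appc vxa vxm X0;
  SAssign vx (EVar vD);
  posloop;
  appc vxa vxm [:: false];
  SAssign vx (EVar vD); SAssign vp (EInt 1);
  pwloop;
  appE vxa vxm (EVar vD) (EVar vp);
  appE va vm (EVar vxa) (EVar vxm);
  appc va vm Bmid;
  appE va vm (EVar vxa) (EVar vxm);
  appc va vm Cend;
  SAssign vq (EInt 0); SAssign vl (EInt 0);
  SAssign vh (EBin OSub (EBin OMod (EVar va) (EInt K)) (EInt 1));
  SAssign vr (EBin ODiv (EVar va) (EInt K));
  SAssign vrun (EBool true);
  loop M;
  SIf (EBin OEq (EVar vh) (EInt 2)) (SOutput (EInt 1)) (SOutput (EInt 0)) ].

Lemma rest_ok l0 st p sR t c :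
  l0 vD = Some (VInt (Z.pos p)) -> Nb sR = Z.pos p ->
  run_steps t (init_config M (Apre ++ (X0 ++ enc_pos p ++ sR) ++ Bmid ++ (X0 ++ enc_pos p ++ sR) ++ Cend)) = Some c ->
  Ex Rest l0 st (OOutput (if val (chead c) == 2 then 1%Z else 0%Z)).
Proof.
move=> HD HsR Hrun.
set X := X0 ++ enc_pos p ++ sR.
rewrite /Rest /seqs.
apply: Ex_seq; first by apply: Ex_assign.
apply: Ex_seq; first by apply: Ex_assign.
apply: Ex_seq.
  apply: (@appc_ok _ _ va vm [::] Apre) => //.
rewrite cat0s.
set l1 := upd_loc (upd_loc _ _ _) _ _.
have Hl1 : wr l1 va vm Apre /\ l1 vD = Some (VInt (Z.pos p)).
  by split; [split|]; rewrite /l1 ?upd_loc_E.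
move: l1 Hl1 => l1 [Hw1 HD1].
apply: Ex_seq; first by apply: Ex_assign.
apply: Ex_seq; first by apply: Ex_assign.
apply: Ex_seq.
  apply: (@appc_ok _ _ vxa vxm [::] X0) => //.
rewrite cat0s.
apply: Ex_seq; first by apply: Ex_assign; rewrite /ev /= ?upd_loc_E /= HD1.
set l2 := upd_loc _ _ _.
have [l3 [E3 [[s' [Hw3 Hs']] Hag3]]] := @posloop_ok l2 st p X0 ltac:(by rewrite /l2 upd_loc_E)
   ltac:(by split; rewrite /l2 ?upd_loc_E).
apply: (Ex_seq E3).
case: Hw1 => Ha1 Hm1.
have Ha3 : l3 va = Some (VInt (Nb Apre)) by rewrite Hag3 // /l2 !upd_loc_E /=.
have Hm3 : l3 vm = Some (VInt (Pw Apre)) by rewrite Hag3 // /l2 !upd_loc_E /=.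
have HD3 : l3 vD = Some (VInt (Z.pos p)) by rewrite Hag3 // /l2 !upd_loc_E /=.
apply: Ex_seq; first by apply: (@appc_ok _ _ vxa vxm s' [:: false]).
rewrite Hs'.
apply: Ex_seq; first by apply: Ex_assign; rewrite /ev /= ?upd_loc_E /= HD3.
apply: Ex_seq; first by apply: Ex_assign.
set l4 := upd_loc _ vp _.
have [l5 [E5 [Hp5 Hag5]]] := @pwloop_ok l4 st sR
   ltac:(by rewrite /l4 !upd_loc_E /= HsR) ltac:(by rewrite /l4 !upd_loc_E).
apply: (Ex_seq E5).
have Ha5 : l5 va = Some (VInt (Nb Apre)) by rewrite Hag5 // /l4 !upd_loc_E /=.
have Hm5 : l5 vm = Some (VInt (Pw Apre)) by rewrite Hag5 // /l4 !upd_loc_E /=.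
have HD5 : l5 vD = Some (VInt (Z.pos p)) by rewrite Hag5 // /l4 !upd_loc_E /=.
have Hxa5 : l5 vxa = Some (VInt (Nb (X0 ++ enc_pos p))) by rewrite Hag5 // /l4 !upd_loc_E /=.
have Hxm5 : l5 vxm = Some (VInt (Pw (X0 ++ enc_pos p))) by rewrite Hag5 // /l4 !upd_loc_E /=.
apply: Ex_seq.
  apply: (@appE_ok _ _ vxa vxm _ _ (X0 ++ enc_pos p) sR) => //.
    by rewrite /ev /= HD5 HsR.
rewrite -catA -/X.
apply: Ex_seq.
  apply: (@appE_ok _ _ va vm _ _ Apre X) => //.
  all: try (by split; rewrite ?upd_loc_E /=); try (by rewrite /ev /= ?upd_loc_E /=).
apply: Ex_seq; first by apply: (@appc_ok _ _ va vm (Apre ++ X) Bmid).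
apply: Ex_seq.
  apply: (@appE_ok _ _ va vm _ _ ((Apre ++ X) ++ Bmid) X) => //.
  all: try (by split; rewrite ?upd_loc_E /=); try (by rewrite /ev /= ?upd_loc_E /=).
apply: Ex_seq; first by apply: (@appc_ok _ _ va vm (((Apre ++ X) ++ Bmid) ++ X) Cend).
have Ew : (((Apre ++ X) ++ Bmid) ++ X) ++ Cend = Apre ++ X ++ Bmid ++ X ++ Cend.
  by rewrite -!catA.
rewrite Ew.
set w := Apre ++ X ++ Bmid ++ X ++ Cend.
set l7 := upd_loc _ vm _.
have Ha7 : l7 va = Some (VInt (Nb w)).
  by rewrite /l7 upd_loc_E upd_loc_E eqxx (_ : (va == vm) = false).
move: l7 Ha7 => l7 Ha7.
have [w' Hw'] : exists w', w = false :: w' by rewrite /w /Apre; eexists.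
apply: Ex_seq; first by apply: Ex_assign.
apply: Ex_seq; first by apply: Ex_assign.
apply: Ex_seq; first by apply: Ex_assign; rewrite /ev /= ?upd_loc_E /= Ha7 ?KK_neq0.
apply: Ex_seq; first by apply: Ex_assign; rewrite /ev /= ?upd_loc_E /= Ha7 ?KK_neq0.
apply: Ex_seq; first by apply: Ex_assign.
set l8 := upd_loc _ vrun _.
have Henc : encs l8 (init_config M w) true.
  rewrite Hw' /l8 /=; split; rewrite ?upd_loc_E //=.
  - by rewrite Hw' -Ns_bits map_cons Ns_head.
  - by rewrite Hw' -Ns_bits map_cons Ns_div.
have [l9 [E9 Henc9]] := loop_ok Lint inp nd addr st Hrun Henc.
apply: (Ex_seq E9).
apply: Ex_seq_out.
case: Henc9 => _ Hh9 _ _ _.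
apply: (Ex_if (b := Z.eqb (zn (val (chead c))) 2)); first by rewrite /ev /= Hh9.
rewrite -[2%Z]/(zn 2) zn_eqb.
by case: ifP => _; apply: Ex_output.
Qed.

End Build.

Definition Dval (M : TM) : Z := Nb M (enc_stmt (Rest M)).
Definition Prog (M : TM) : stmt := SSeq (SAssign vD (EInt (Dval M))) (Rest M).
Definition sysP (P : stmt) : system := SNode (cP P) None [::].

Lemma Dval_pos M : (0 < Dval M)%Z.
Proof.
rewrite /Dval; have [s2 ->] : exists s2, Rest M = SSeq (SAssign va (EInt 0)) s2 by eexists.
have [t ->] : exists t, enc_stmt (SSeq (SAssign va (EInt 0)) s2) = true :: t by eexists.
exact: Nb_cons_pos.
Qed.

Lemma enc_Prog_gen p R : enc_stmt (SSeq (SAssign vD (EInt (Z.pos p))) R) = X0 ++ enc_pos p ++ enc_stmt R.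
Proof. by []. Qed.

Lemma run_sysP f P : run f [::] [::] (sysP P) = exec f [::] [::] (sysP P) [::] empty_locals empty_store P.
Proof. by []. Qed.

Lemma Prog_ok M t c :
  run_steps t (init_config M (enc_instance (instP (Prog M)))) = Some c ->
  Ex [::] [::] (sysP (Prog M)) [::] (Prog M) empty_locals empty_store
     (OOutput (if val (chead c) == 2 then 1%Z else 0%Z)).
Proof.
move=> Hrun.
have Hp := Z2Pos.id _ (Dval_pos M).
set p := Z.to_pos (Dval M) in Hp.
have HP : Prog M = SSeq (SAssign vD (EInt (Z.pos p))) (Rest M) by rewrite Hp.
rewrite enc_instP HP enc_Prog_gen in Hrun.
apply: Ex_seq; first by apply: Ex_assign.

apply: (rest_ok [::] [::] (sysP (Prog M)) [::] empty_store _ _ Hrun).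
  by rewrite upd_loc_E eqxx Hp.
by rewrite Hp.
Qed.

Lemma valid_sysP P : valid_system [:: cP P] (cP P) (sysP P).
Proof.
exists [::]; split=> //.
constructor=> //=; first by left.
Qed.

Lemma valid_only P sys : valid_system [:: cP P] (cP P) sys -> sys = sysP P.
Proof.
case=> ch [-> H]; inversion H; subst.
by case: ch H H7 H8 => // x ch.
Qed.

Lemma valid_instP P : valid_instance (instP P).
Proof.
split; first by move=> p /= [<-|[]].
split.
  split; first by [].
  split; first by move=> k /= [<-|[]] n /=.
  by move=> k _ I /=.
split; first by left.
by exists (FunDef 0 0 [::] P); split=> //; left.
Qed.

Theorem mainTheorem1 (Rew : system -> nat) (Env : system -> seq nat) :
  (forall sys, 0 < Rew sys) ->
  poly_time_computable enc_system enc_nat Rew ->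
  poly_time_computable enc_system (enc_seq enc_nat) Env ->
  ~ exists M : TM, solves_ESCreate Rew M.
Proof.
move=> _ _ _ [M HM].
have [a [Hcorr [t [c [Hrun Hout]]]]] := HM _ (valid_instP (Prog M)).
have HEx := Prog_ok Hrun.
move: Hcorr Hout; rewrite /ESCreate_correct /=.
case: a => [sys|] /=.
- move=> [[Hv Hw] _] Hout.
  have Hs := valid_only Hv; subst sys.
  have [f Hf] := Hw _ (or_introl erefl).
  rewrite run_sysP /= in Hf.
  have E : Ex [::] [::] (sysP (Prog M)) [::] (Prog M) empty_locals empty_store (OOutput 0%Z)
    by split=> //; exists f.
  have := Ex_det HEx E.
  move: Hout; rewrite /tm_output /=.
  case: ifP => _ //; case: ifP => // _ _; discriminate.
- move=> Hno Hout; apply: Hno; exists (sysP (Prog M)); split; first exact: valid_sysP.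
  move=> pr /= [<-|[]] /=.
  have: (if val (chead c) == 2 then 1%Z else 0%Z) = 0%Z.
    move: Hout; rewrite /tm_output /=.
    case: ifP => [/eqP -> //|_]; case: ifP => // _; discriminate.
  move=> E; rewrite E in HEx.
  case: HEx => _ [f Hf]; exists f; by rewrite run_sysP.
Qed.
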